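(* Consider a market with $n$ goods, supplies $w_i>0$ and demands $x_i:(0,\infty)^n\to(0,\infty)$ satisfying: (fixed spending) $\sum_ip_ix_i(p)=M$ for all $p$ (constant $M>0$); (WGS) for $j\ne i$, $x_j(p)$ is non-decreasing in $p_i$; (elasticity $E$) each $x_i$ is differentiable in $p_i$ and $\frac{x_i(p)}{p_i}\le-\frac{\partial x_i}{\partial p_i}(p)\le E\frac{x_i(p)}{p_i}$ for all $p$, where $E\ge1$. Let $0<\lambda\le\frac12$ with $\lambda(2E-1)\le\frac12$. Given $p$, define the simultaneous update $p'$ by $p_i'=p_i\big(1+\lambda\min\{1,\frac{x_i(p)-w_i}{w_i}\}\big)$ for all $i$, and let $\phi(q)=\sum_iq_i|x_i(q)-w_i|$. Then \[ \phi(p)-\phi(p')\ \ge\ \sum_i\lambda\, p_i|x_i(p)-w_i|\min\Big\{1,\frac{w_i}{|x_i(p)-w_i|}\Big\} \] (terms with $x_i(p)=w_i$ being $0$). In particular, if $x_i(p)\le d\,w_i$ for all $i$ with $d\ge 2$, then $\phi(p')\le\big(1-\frac{\lambda}{d-1}\big)\phi(p)$. *)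

(* Defs.v *)
From Stdlib Require Import Reals Arith.
Open Scope R_scope.

(* Goods are indexed by 0..n-1; a price vector is a function nat -> R,
   only its first n coordinates are meaningful. *)

Fixpoint sumR (n : nat) (f : nat -> R) : R :=
  match n with
  | O => 0
  | S k => sumR k f + f k
  end.

Definition pos_prices (n : nat) (p : nat -> R) : Prop :=
  forall i, (i < n)%nat -> 0 < p i.

Definition upd (p : nat -> R) (i : nat) (t : R) : nat -> R :=
  fun j => if Nat.eqb j i then t else p j.

Definition update (n : nat) (lam : R) (w : nat -> R)
    (x : nat -> (nat -> R) -> R) (p : nat -> R) : nat -> R :=
  fun i => if Nat.ltb i n
           then p i * (1 + lam * Rmin 1 ((x i p - w i) / w i))
           else p i.

Definition phi (n : nat) (w : nat -> R) (x : nat -> (nat -> R) -> R)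
    (q : nat -> R) : R :=
  sumR n (fun i => q i * Rabs (x i q - w i)).

(* Main.v *)
Require Import Defs.
From Stdlib Require Import Reals Arith Lra Lia Psatz FunctionalExtensionality ClassicalEpsilon MVT Rpower.
Open Scope R_scope.

Lemma upd_same (p : nat -> R) i : upd p i (p i) = p.
Proof. apply functional_extensionality; intro j; unfold upd.
  destruct (Nat.eqb j i) eqn:E; [apply Nat.eqb_eq in E; subst|]; reflexivity. Qed.

Lemma upd_upd (p : nat -> R) i t s : upd (upd p i t) i s = upd p i s.
Proof. apply functional_extensionality; intro j; unfold upd.
  destruct (Nat.eqb j i); reflexivity. Qed.

Lemma upd_eq (p : nat -> R) i t : upd p i t i = t.
Proof. unfold upd; rewrite Nat.eqb_refl; reflexivity. Qed.

Lemma sumR_ext n f g : (forall i, (i < n)%nat -> f i = g i) -> sumR n f = sumR n g.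
Proof. induction n; simpl; intros H; [reflexivity|].
  rewrite IHn by (intros; apply H; lia). rewrite H by lia. reflexivity. Qed.

Lemma sumR_le n f g : (forall i, (i < n)%nat -> f i <= g i) -> sumR n f <= sumR n g.
Proof. induction n; simpl; intros H; [lra|].
  assert (sumR n f <= sumR n g) by (apply IHn; intros; apply H; lia).
  assert (f n <= g n) by (apply H; lia). lra. Qed.

Lemma sumR_plus n f g : sumR n (fun i => f i + g i) = sumR n f + sumR n g.
Proof. induction n; simpl; [lra|]. rewrite IHn; lra. Qed.

Lemma sumR_scal n c f : sumR n (fun i => c * f i) = c * sumR n f.
Proof. induction n; simpl; [lra|]. rewrite IHn; lra. Qed.

Lemma sumR_minus n f g : sumR n (fun i => f i - g i) = sumR n f - sumR n g.
Proof. induction n; simpl; [lra|]. rewrite IHn; lra. Qed.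

Lemma wgs_chain (n : nat) (x : nat -> (nat -> R) -> R)
  (hWGS : forall i j, (i < n)%nat -> (j < n)%nat -> j <> i ->
     forall p s t, pos_prices n p -> 0 < s -> s <= t ->
       x j (upd p i s) <= x j (upd p i t))
  i (hi : (i < n)%nat) (q r : nat -> R) (hq : pos_prices n q) (hr : pos_prices n r)
  (hle : forall j, (j < n)%nat -> q j <= r j) (heq : q i = r i)
  (hout : forall j, (n <= j)%nat -> q j = r j) : x i q <= x i r.
Proof.
  set (mix := fun k j => if Nat.ltb j k then r j else q j).
  assert (Hpos : forall k, pos_prices n (mix k)).
  { intros k j hj; unfold mix; destruct (Nat.ltb j k); [apply hr|apply hq]; lia. }
  assert (H : forall k, (k <= n)%nat -> x i q <= x i (mix k)).
  { induction k; intros hk.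
    - assert (mix 0%nat = q) as ->. { apply functional_extensionality; intro j; reflexivity. } lra.
    - assert (IH := IHk ltac:(lia)).
      assert (E1 : mix (S k) = upd (mix k) k (r k)).
      { apply functional_extensionality; intro j; unfold mix, upd.
        destruct (Nat.eqb j k) eqn:E; [apply Nat.eqb_eq in E; subst;
          destruct (Nat.ltb k (S k)) eqn:E2; [reflexivity|apply Nat.ltb_ge in E2; lia]|].
        apply Nat.eqb_neq in E.
        destruct (Nat.ltb j (S k)) eqn:E2; destruct (Nat.ltb j k) eqn:E3; try reflexivity;
          apply Nat.ltb_lt in E2 || apply Nat.ltb_ge in E2;
          apply Nat.ltb_lt in E3 || apply Nat.ltb_ge in E3; lia. }
      assert (E0 : mix k = upd (mix k) k (q k)).
      { apply functional_extensionality; intro j; unfold mix, upd.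
        destruct (Nat.eqb j k) eqn:E; [apply Nat.eqb_eq in E; subst|reflexivity].
        assert (Nat.ltb k k = false) as -> by (apply Nat.ltb_ge; lia). reflexivity. }
      destruct (Nat.eq_dec k i) as [->|hne].
      + rewrite E1, <- heq, <- E0. exact IH.
      + eapply Rle_trans; [exact IH|]. rewrite E1. rewrite E0 at 1.
        apply hWGS; auto; try lia. }
  assert (Hm : mix n = r).
  { apply functional_extensionality; intro j; unfold mix.
    destruct (Nat.ltb j n) eqn:E; [reflexivity|]. apply Nat.ltb_ge in E. apply hout; lia. }
  rewrite <- Hm. apply H; lia.
Qed.

Lemma der_exp K t : derivable_pt_lim (fun t => exp (K * t)) t (K * exp (K * t)).
Proof.
  assert (H := derivable_pt_lim_comp (fun t => K * t) exp t K (exp (K*t))).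
  replace (K * exp (K*t)) with (exp (K*t) * K) by ring. apply H.
  - assert (H1 := derivable_pt_lim_scal (fun t => t) K t 1 (derivable_pt_lim_id t)).
    unfold mult_real_fct in H1. rewrite Rmult_1_r in H1. exact H1.
  - apply derivable_pt_lim_exp.
Qed.

Lemma mono (n : nat) (x : nat -> (nat -> R) -> R) (E : R)
  (hxpos : forall p, pos_prices n p -> forall i, (i < n)%nat -> 0 < x i p)
  (hElast : forall p, pos_prices n p -> forall i, (i < n)%nat ->
     exists l, derivable_pt_lim (fun t => x i (upd p i t)) (p i) l /\
       x i p / p i <= - l /\ - l <= E * (x i p / p i))
  (q : nat -> R) (hq : pos_prices n q) i (hi : (i < n)%nat) a b K
  (ha : 0 < a) (hab : a <= b) (hK : forall t, a <= t -> E - 1 <= K * t) :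
  a * x i (upd q i a) * exp (K*a) <= b * x i (upd q i b) * exp (K*b).
Proof.
  destruct hab as [hlt|heq]; [|subst; lra].
  set (f := fun t => x i (upd q i t)).
  assert (Hpos : forall t, 0 < t -> pos_prices n (upd q i t)).
  { intros t ht j hj; unfold upd; destruct (Nat.eqb j i); [lra|apply hq; lia]. }
  assert (Hder : forall t, exists l, 0 < t -> derivable_pt_lim f t l /\
      f t / t <= - l /\ - l <= E * (f t / t)).
  { intro t. destruct (Rlt_dec 0 t) as [ht|ht]; [|exists 0; intro; lra].
    destruct (hElast _ (Hpos t ht) i hi) as [l [Hd [H1 H2]]].
    exists l; intros _. rewrite upd_eq in *.
    assert (Ef : (fun s => x i (upd (upd q i t) i s)) = f).
    { apply functional_extensionality; intro s; unfold f; rewrite upd_upd; reflexivity. }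
    rewrite Ef in Hd. unfold f. auto. }
  set (D := fun t => proj1_sig (constructive_indefinite_description _ (Hder t))).
  assert (HD : forall t, 0 < t -> derivable_pt_lim f t (D t) /\
      f t / t <= - D t /\ - D t <= E * (f t / t)).
  { intros t ht. unfold D. destruct (constructive_indefinite_description _ (Hder t)) as [l Hl].
    simpl. auto. }
  set (g := fun t => t * f t * exp (K * t)).
  set (g' := fun t => (1 * f t + t * D t) * exp (K*t) + t * f t * (K * exp (K * t))).
  assert (Hg : forall c, a <= c <= b -> derivable_pt_lim g c (g' c)).
  { intros c hc. destruct (HD c ltac:(lra)) as [Hd _].
    unfold g, g'.
    apply (derivable_pt_lim_mult (fun t => t * f t) (fun t => exp (K*t))).
    - apply (derivable_pt_lim_mult (fun t => t) f). apply derivable_pt_lim_id. exact Hd.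
    - apply der_exp. }
  destruct (MVT_cor2 g g' a b hlt Hg) as [c [Hc Hcab]].
  assert (0 <= g' c).
  { destruct (HD c ltac:(lra)) as [_ [H1 H2]].
    assert (fpos : 0 < f c) by (apply hxpos; [apply Hpos; lra|exact hi]).
    assert (Hkc := hK c ltac:(lra)).
    assert (c * D c >= - E * f c).
    { apply Rmult_le_compat_l with (r := c) in H2; [|lra].
      replace (c * (E * (f c / c))) with (E * f c) in H2 by (field; lra). lra. }
    unfold g'. assert (0 < exp (K * c)) by apply exp_pos.
    assert (0 <= (1 * f c + c * D c + c * f c * K)).
    { assert (c * f c * K = f c * (K * c)) by ring. nra. }
    nra. }
  unfold g in Hc. assert (0 <= g' c * (b - a)) by nra. unfold f in Hc. lra.
Qed.

Lemma key_plus (x w p lam c : R) (hw : 0 < w) (hp : 0 < p) (hxw : w <= x)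
  (hc : 0 <= c) (hlam : 0 < lam <= 1/2) (hl : lam * (2 * c + 1) <= 1/2) :
  let m := Rmin 1 ((x - w) / w) in
  0 <= m <= 1 /\ c * lam * m <= 1 /\
  p * x - p * (1 + lam * m) * w >= c * lam * m * (p * x).
Proof.
  intro m. unfold m, Rmin. destruct (Rle_dec 1 ((x - w) / w)) as [h|h].
  - apply Rle_ge in h. apply Rge_le in h.
    assert (x >= 2 * w).
    { apply Rmult_le_compat_r with (r := w) in h; [|lra].
      replace ((x - w) / w * w) with (x - w) in h by (field; lra). lra. }
    split; [lra|]. split; [nra|].
    assert (c * lam <= 1/4) by nra.
    assert (x * (1 - c*lam) >= 2 * w * (1 - c * lam)) by nra.
    assert (x * (1 - c*lam) - w * (1 + lam) >= 0) by nra.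
    assert (p * (x * (1 - c*lam) - w * (1 + lam)) >= 0) by (apply Rle_ge, Rmult_le_pos; lra).
    nra.
  - apply Rnot_le_lt in h. assert (h' := h).
    assert (x <= 2 * w).
    { apply Rmult_lt_compat_r with (r := w) in h; [|lra].
      replace ((x - w) / w * w) with (x - w) in h by (field; lra). lra. }
    set (m0 := (x - w) / w).
    assert (Hm : m0 * w = x - w) by (unfold m0; field; lra).
    assert (0 <= m0) by (unfold m0; apply Rmult_le_pos; [lra|left; apply Rinv_0_lt_compat; lra]).
    assert (c * lam <= 1/4) by nra.
    assert (c * lam * m0 <= c * lam * 1) by (apply Rmult_le_compat_l; nra).
    split; [unfold m0 in *; lra|]. split; [lra|].
    assert (c * lam * x <= (1 - lam) * w) by nra.
    assert (p * x - p * (1 + lam * m0) * w = p * (x - w) * (1 - lam)) by (replace x with (m0 * w + w) by lra; ring).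
    assert (c * lam * m0 * (p * x) * w = p * (x - w) * (c * lam * x)).
    { replace x with (m0 * w + w) by lra; ring. }
    assert (p * (x - w) * (c * lam * x) <= p * (x - w) * ((1 - lam) * w)).
    { apply Rmult_le_compat_l; [nra|lra]. }
    nra.
Qed.

Lemma key_minus (x w p lam c : R) (hw : 0 < w) (hp : 0 < p) (hx : 0 < x) (hxw : x < w)
  (hc : 0 <= c) (hlam : 0 < lam <= 1/2) (hl : lam * (2 * c + 1) <= 1/2) :
  let m := Rmin 1 ((x - w) / w) in
  m = (x - w) / w /\ -1 < m < 0 /\ 0 <= - 2 * c * lam * m <= 1/2 /\
  p * x * (1 + 2 * (- 2 * c * lam * m)) <= p * (1 + lam * m) * w.
Proof.
  intro m.
  assert (Hlt : (x - w) / w < 0).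
  { apply Rmult_lt_reg_r with w; [lra|]. replace ((x - w) / w * w) with (x - w) by (field; lra). lra. }
  assert (Hm : m = (x - w) / w) by (unfold m, Rmin; destruct (Rle_dec 1 ((x - w) / w)); lra).
  set (m0 := (x - w) / w) in *.
  assert (Hmw : m0 * w = x - w) by (unfold m0; field; lra).
  assert (-1 < m0).
  { apply Rmult_lt_reg_r with w; [lra|]. rewrite Hmw. lra. }
  rewrite Hm. split; [reflexivity|]. split; [lra|].
  assert (c * lam <= 1/4) by nra.
  assert (0 <= c * lam) by (apply Rmult_le_pos; lra).
  assert (0 <= c*lam*(-m0) <= c*lam*1) by (split; [apply Rmult_le_pos|apply Rmult_le_compat_l]; lra).
  split; [split; lra|].
  assert (4 * c * lam * x <= (1 - lam) * w) by nra.
  replace x with (m0 * w + w) in * by lra.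
  assert (0 <= - m0) by lra.
  assert (0 <= p * (- m0)) by nra.
  assert (p * (- m0) * (4 * c * lam * (m0 * w + w)) <= p * (- m0) * ((1 - lam) * w))
    by (apply Rmult_le_compat_l; lra).
  nra.
Qed.

Lemma exp_step1 Q B y : 0 <= B -> 0 <= Q -> y <= 1 -> Q <= B * exp y -> (1 - y) * Q <= B.
Proof.
  intros hB hQ hy h. pose proof (exp_ineq1_le (- y)) as H1.
  assert (He : exp y * exp (- y) = 1) by (rewrite <- exp_plus; replace (y + - y) with 0 by ring; apply exp_0).
  pose proof (exp_pos y). pose proof (exp_pos (-y)).
  assert ((1 - y) * Q <= (1 - y) * (B * exp y)) by (apply Rmult_le_compat_l; lra).
  assert ((1 - y) * (B * exp y) <= exp (-y) * (B * exp y)).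
  { apply Rmult_le_compat_r; [apply Rmult_le_pos; lra|lra]. }
  assert (exp (-y) * (B * exp y) = B) by (transitivity (B * (exp y * exp (-y))); [ring|rewrite He; ring]).
  lra.
Qed.

Lemma exp_step2 Q S y : 0 <= S -> 0 <= y <= 1/2 -> Q <= S * exp y -> Q <= S * (1 + 2 * y).
Proof.
  intros hS hy h. pose proof (exp_ineq1_le (- y)) as H1.
  assert (He : exp y * exp (- y) = 1) by (rewrite <- exp_plus; replace (y + - y) with 0 by ring; apply exp_0).
  pose proof (exp_pos y). pose proof (exp_pos (-y)).
  assert (exp y * (1 - y) <= 1).
  { apply Rle_trans with (exp y * exp (-y)); [apply Rmult_le_compat_l; lra|lra]. }
  assert (exp y <= 1 + 2 * y).
  { apply Rmult_le_reg_r with (1 - y); [lra|]. nra. }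
  assert (S * exp y <= S * (1 + 2 * y)) by (apply Rmult_le_compat_l; lra).
  lra.
Qed.

Theorem mainTheorem7
  (n : nat) (w : nat -> R) (x : nat -> (nat -> R) -> R) (M E lam : R)
  (hw : forall i, (i < n)%nat -> 0 < w i)
  (hxpos : forall p, pos_prices n p -> forall i, (i < n)%nat -> 0 < x i p)
  (hM : 0 < M)
  (hspend : forall p, pos_prices n p -> sumR n (fun i => p i * x i p) = M)
  (hWGS : forall i j, (i < n)%nat -> (j < n)%nat -> j <> i ->
     forall p s t, pos_prices n p -> 0 < s -> s <= t ->
       x j (upd p i s) <= x j (upd p i t))
  (hE1 : 1 <= E)
  (hElast : forall p, pos_prices n p -> forall i, (i < n)%nat ->
     exists l, derivable_pt_lim (fun t => x i (upd p i t)) (p i) l /\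
       x i p / p i <= - l /\ - l <= E * (x i p / p i))
  (hlam : 0 < lam <= 1/2) (hlamE : lam * (2 * E - 1) <= 1/2)
  (p : nat -> R) (hp : pos_prices n p) :
  phi n w x p - phi n w x (update n lam w x p) >=
    sumR n (fun i => lam * p i * Rabs (x i p - w i)
                      * Rmin 1 (w i / Rabs (x i p - w i)))
  /\
  (forall d, 2 <= d -> (forall i, (i < n)%nat -> x i p <= d * w i) ->
     phi n w x (update n lam w x p) <= (1 - lam / (d - 1)) * phi n w x p).
Proof.
  set (c := E - 1).
  assert (hc : 0 <= c) by (unfold c; lra).
  assert (hl : lam * (2 * c + 1) <= 1/2) by (unfold c; lra).
  set (p' := update n lam w x p).
  set (m := fun i => Rmin 1 ((x i p - w i) / w i)).
  assert (Hp'i : forall i, (i < n)%nat -> p' i = p i * (1 + lam * m i)).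
  { intros i hi. unfold p', update. rewrite (proj2 (Nat.ltb_lt i n) hi). reflexivity. }
  assert (Hp'o : forall i, (n <= i)%nat -> p' i = p i).
  { intros i hi. unfold p', update. rewrite (proj2 (Nat.ltb_ge i n) hi). reflexivity. }
  assert (Hm : forall i, (i < n)%nat -> -1 < m i <= 1).
  { intros i hi. assert (0 < x i p) by (apply hxpos; auto). assert (0 < w i) by auto.
    unfold m, Rmin. destruct (Rle_dec 1 ((x i p - w i) / w i)); [lra|].
    split; [|lra]. apply Rmult_lt_reg_r with (w i); [lra|].
    replace ((x i p - w i) / w i * w i) with (x i p - w i) by (field; lra). lra. }
  assert (hp' : pos_prices n p').
  { intros i hi. rewrite Hp'i by auto. assert (0 < p i) by auto.
    assert (Hmi := Hm i hi). apply Rmult_lt_0_compat; [lra|]. nra. }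
  set (q := fun j => if Nat.ltb j n then
              (if Rlt_dec (x j p) (w j) then p' j else p j) else p j).
  assert (Hq_le_p : forall j, (j < n)%nat -> q j <= p j).
  { intros j hj. unfold q. rewrite (proj2 (Nat.ltb_lt j n) hj).
    destruct (Rlt_dec (x j p) (w j)) as [h|h]; [|lra].
    rewrite Hp'i by auto. assert (0 < p j) by auto. assert (0 < w j) by auto.
    assert (m j <= 0).
    { unfold m, Rmin. destruct (Rle_dec 1 ((x j p - w j) / w j)); [|].
      - exfalso. assert (0 < (x j p - w j)/w j) by lra.
        assert ((x j p - w j)/w j * w j = x j p - w j) by (field; lra). nra.
      - assert ((x j p - w j)/w j * w j = x j p - w j) by (field; lra). nra. }
    assert (lam * m j <= 0) by (rewrite <- (Rmult_0_r lam); apply Rmult_le_compat_l; lra).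
    nra. }
  assert (Hq_le_p' : forall j, (j < n)%nat -> q j <= p' j).
  { intros j hj. unfold q. rewrite (proj2 (Nat.ltb_lt j n) hj).
    destruct (Rlt_dec (x j p) (w j)) as [h|h]; [lra|].
    rewrite Hp'i by auto. assert (0 < p j) by auto. assert (0 < w j) by auto.
    assert (0 <= m j).
    { unfold m, Rmin. destruct (Rle_dec 1 ((x j p - w j) / w j)); [lra|].
      apply Rmult_le_pos; [lra|left; apply Rinv_0_lt_compat; lra]. }
    assert (0 <= lam * m j) by (apply Rmult_le_pos; lra).
    nra. }
  assert (hq : pos_prices n q).
  { intros j hj. unfold q. rewrite (proj2 (Nat.ltb_lt j n) hj).
    destruct (Rlt_dec (x j p) (w j)); [apply hp'|apply hp]; auto. }
  assert (Hqo : forall j, (n <= j)%nat -> q j = p j).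
  { intros j hj. unfold q. rewrite (proj2 (Nat.ltb_ge j n) hj). reflexivity. }
  assert (Hgood : forall i, (i < n)%nat ->
    Rabs (p' i * x i p' - p' i * w i) <=
      Rabs (p i * x i p - p' i * w i) + (p' i * x i p' + p i * x i p - 2 * (q i * x i q))).
  { intros i hi. assert (0 < p i) by auto. assert (0 < w i) by auto.
    assert (0 < x i p) by (apply hxpos; auto). assert (0 < p' i) by auto.
    assert (0 < x i p') by (apply hxpos; auto). assert (0 < x i q) by (apply hxpos; auto).
    assert (Hupos : forall (r : nat -> R) t, pos_prices n r -> 0 < t -> pos_prices n (upd r i t)).
    { intros r t hr ht j hj. unfold upd. destruct (Nat.eqb j i); auto. }
    assert (Hqi : q i = if Rlt_dec (x i p) (w i) then p' i else p i).
    { unfold q. rewrite (proj2 (Nat.ltb_lt i n) hi). reflexivity. }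
    destruct (Rlt_dec (x i p) (w i)) as [hlt|hge].
    -
      destruct (key_minus (x i p) (w i) (p i) lam c) as [Hm0 [Hmr [Hy Hk]]]; auto.
      fold (m i) in Hm0, Hmr, Hy, Hk. rewrite <- Hp'i in Hk by auto.
      assert (HPQ : x i q <= x i p').
      { apply (wgs_chain n x hWGS i hi q p' hq hp' Hq_le_p' Hqi).
        intros j hj. rewrite Hqo, Hp'o; auto. }
      assert (HQB : x i q <= x i (upd p i (p' i))).
      { apply (wgs_chain n x hWGS i hi); auto.
        - intros j hj. unfold upd. destruct (Nat.eqb j i) eqn:Ej.
          + apply Nat.eqb_eq in Ej; subst; lra.
          + apply Hq_le_p; auto.
        - rewrite upd_eq; auto.
        - intros j hj. unfold upd. destruct (Nat.eqb j i) eqn:Ej.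
          + apply Nat.eqb_eq in Ej; lia.
          + apply Hqo; auto. }
      assert (Hmono := mono n x E hxpos hElast p hp i hi (p' i) (p i) (2 * c / p i)).
      rewrite upd_same in Hmono.
      assert (Hlm : - lam < lam * m i < 0) by (split; nra).
      assert (Hp'p : p' i <= p i) by (rewrite Hp'i by auto; nra).
      assert (Hmono' : p' i * x i (upd p i (p' i)) * exp (2 * c / p i * p' i) <=
                       p i * x i p * exp (2 * c / p i * p i)).
      { apply Hmono; auto. intros t ht.
        assert (p' i >= p i / 2) by (rewrite Hp'i by auto; nra).
        assert (t >= p i / 2) by lra.
        replace (2 * c / p i * t) with (c + c * (2 * t - p i) / p i) by (field; lra).
        assert (0 <= c * (2 * t - p i) / p i).
        { apply Rmult_le_pos; [apply Rmult_le_pos; lra|left; apply Rinv_0_lt_compat; lra]. }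
        unfold c in *; lra. }
      replace (2 * c / p i * p i) with (2 * c / p i * p' i + (- 2 * c * lam * m i)) in Hmono'
        by (rewrite Hp'i by auto; field; lra).
      rewrite exp_plus in Hmono'.
      assert (HB : p' i * x i (upd p i (p' i)) <= p i * x i p * exp (- 2 * c * lam * m i)).
      { pose proof (exp_pos (2 * c / p i * p' i)).
        apply Rmult_le_reg_r with (exp (2 * c / p i * p' i)); [lra|]. lra. }
      apply exp_step2 in HB; [|apply Rmult_le_pos; lra|exact Hy].
      assert (HQ : q i * x i q <= p' i * w i).
      { rewrite Hqi. assert (p' i * x i q <= p' i * x i (upd p i (p' i)))
          by (apply Rmult_le_compat_l; lra). lra. }
      assert (HP : q i * x i q <= p' i * x i p').
      { rewrite Hqi. apply Rmult_le_compat_l; lra. }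
      assert (HSt : p i * x i p - p' i * w i < 0).
      { rewrite Hp'i by auto. rewrite Hm0.
        replace (p i * x i p - p i * (1 + lam * ((x i p - w i) / w i)) * w i)
          with ((1 - lam) * p i * (x i p - w i)) by (field; lra).
        assert (0 < (1 - lam) * p i) by (apply Rmult_lt_0_compat; lra). nra. }
      rewrite (Rabs_left (p i * x i p - p' i * w i)) by lra.
      unfold Rabs. destruct (Rcase_abs (p' i * x i p' - p' i * w i)); lra.
    -
      destruct (key_plus (x i p) (w i) (p i) lam c) as [Hm01 [Hy Hk]]; auto; try lra.
      fold (m i) in Hm01, Hy, Hk. rewrite <- Hp'i in Hk by auto.
      assert (HQS : x i q <= x i p).
      { apply (wgs_chain n x hWGS i hi q p hq hp Hq_le_p Hqi Hqo). }
      set (r := upd q i (p' i)).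
      assert (hr : pos_prices n r) by (apply Hupos; auto).
      assert (HBP : x i r <= x i p').
      { apply (wgs_chain n x hWGS i hi r p' hr hp').
        - intros j hj. unfold r, upd. destruct (Nat.eqb j i) eqn:Ej.
          + apply Nat.eqb_eq in Ej; subst; lra.
          + apply Hq_le_p'; auto.
        - unfold r; rewrite upd_eq; auto.
        - intros j hj. unfold r, upd. destruct (Nat.eqb j i) eqn:Ej.
          + apply Nat.eqb_eq in Ej; lia.
          + rewrite Hqo, Hp'o; auto. }
      assert (Hlm : 0 <= lam * m i) by (apply Rmult_le_pos; lra).
      assert (Hpp : p i <= p' i) by (rewrite Hp'i by auto; nra).
      assert (Hmono := mono n x E hxpos hElast q hq i hi (q i) (p' i) (c / q i)).
      rewrite upd_same, Hqi in Hmono. rewrite Hqi.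
      assert (Hmono' : p i * x i q * exp (c / p i * p i) <=
                       p' i * x i r * exp (c / p i * p' i)).
      { apply Hmono; auto. intros t ht.
        replace (c / p i * t) with (c + c * (t - p i) / p i) by (field; lra).
        assert (0 <= c * (t - p i) / p i).
        { apply Rmult_le_pos; [apply Rmult_le_pos; lra|left; apply Rinv_0_lt_compat; lra]. }
        unfold c in *; lra. }
      replace (c / p i * p' i) with (c / p i * p i + c * lam * m i) in Hmono'
        by (rewrite Hp'i by auto; field; lra).
      rewrite exp_plus in Hmono'.
      assert (HB : p i * x i q <= p' i * x i r * exp (c * lam * m i)).
      { pose proof (exp_pos (c / p i * p i)).
        apply Rmult_le_reg_r with (exp (c / p i * p i)); [lra|].
        replace (p' i * x i r * exp (c * lam * m i) * exp (c / p i * p i)) with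
          (p' i * x i r * (exp (c / p i * p i) * exp (c * lam * m i))) by ring. exact Hmono'. }
      assert (0 < x i r) by (apply hxpos; auto).
      apply exp_step1 in HB; [| apply Rmult_le_pos; lra | apply Rmult_le_pos; lra | lra].
      assert (HP : p' i * x i r <= p' i * x i p') by (apply Rmult_le_compat_l; lra).
      assert (HQ : p i * x i q <= p i * x i p) by (apply Rmult_le_compat_l; lra).
      assert (0 <= p i * x i q) by (apply Rmult_le_pos; lra).
      assert (0 <= c * lam * m i).
      { apply Rmult_le_pos; [apply Rmult_le_pos|]; lra. }
      assert (0 <= c * lam * m i * (p i * x i p - p i * x i q)) by (apply Rmult_le_pos; lra).
      assert (Hst : (1 - c * lam * m i) * (p i * x i q) >=
                    (1 - c * lam * m i) * (p i * x i p) - (p i * x i p - p i * x i q)).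
      { assert (Heq : (1 - c * lam * m i) * (p i * x i q) - ((1 - c * lam * m i) * (p i * x i p) - (p i * x i p - p i * x i q)) = c * lam * m i * (p i * x i p - p i * x i q)) by ring.
        lra. }
      assert (Heq2 : (1 - c * lam * m i) * (p i * x i p) = p i * x i p - c * lam * m i * (p i * x i p)) by ring.
      assert (0 <= c * lam * m i * (p i * x i p)) by (apply Rmult_le_pos; [lra|apply Rmult_le_pos; lra]).
      rewrite (Rabs_right (p i * x i p - p' i * w i)) by lra.
      unfold Rabs. destruct (Rcase_abs (p' i * x i p' - p' i * w i)); lra. }
  assert (Hid : forall i, (i < n)%nat ->
    Rabs (p i * x i p - p' i * w i) = p i * Rabs (x i p - w i) -
      lam * p i * Rabs (x i p - w i) * Rmin 1 (w i / Rabs (x i p - w i))).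
  { intros i hi. assert (0 < p i) by auto. assert (0 < w i) by auto.
    assert (0 < x i p) by (apply hxpos; auto). rewrite Hp'i by auto.
    destruct (Rtotal_order (x i p) (w i)) as [hlt|[heq|hgt]].
    - destruct (key_minus (x i p) (w i) (p i) lam c) as [Hm0 _]; auto.
      fold (m i) in Hm0. rewrite Hm0.
      assert (Hmw : (x i p - w i) / w i * w i = x i p - w i) by (field; lra).
      replace (p i * x i p - p i * (1 + lam * ((x i p - w i) / w i)) * w i)
        with ((1 - lam) * p i * (x i p - w i)) by (rewrite <- Hmw; field; lra).
      rewrite (Rabs_left (x i p - w i)) by lra.
      rewrite (Rabs_left ((1 - lam) * p i * (x i p - w i))).
      2:{ assert (0 < (1 - lam) * p i) by (apply Rmult_lt_0_compat; lra). nra. }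
      assert (Rmin 1 (w i / - (x i p - w i)) = 1) as ->.
      { unfold Rmin. destruct (Rle_dec 1 (w i / - (x i p - w i))) as [_|h]; [reflexivity|].
        exfalso; apply h. apply Rmult_le_reg_r with (- (x i p - w i)); [lra|].
        replace (w i / - (x i p - w i) * - (x i p - w i)) with (w i) by (field; lra). lra. }
      ring.
    - unfold m. rewrite heq. replace (w i - w i) with 0 by ring.
      rewrite Rabs_R0. replace (0 / w i) with 0 by (field; lra).
      unfold Rmin. destruct (Rle_dec 1 0); [lra|]. rewrite Rmult_0_r, Rplus_0_r, Rmult_1_r.
      replace (p i * w i - p i * w i) with 0 by ring. rewrite Rabs_R0. ring.
    - destruct (key_plus (x i p) (w i) (p i) lam c) as [Hm01 [_ Hk]]; auto; try lra.
      fold (m i) in Hm01, Hk.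
      assert (0 <= c * lam * m i * (p i * x i p)).
      { apply Rmult_le_pos; [|apply Rmult_le_pos; lra].
        apply Rmult_le_pos; [apply Rmult_le_pos|]; lra. }
      rewrite Rabs_right by lra. rewrite (Rabs_right (x i p - w i)) by lra.
      assert (Heq : m i * w i = (x i p - w i) * Rmin 1 (w i / (x i p - w i))).
      { unfold m, Rmin. destruct (Rle_dec 1 ((x i p - w i) / w i)) as [h1|h1];
        destruct (Rle_dec 1 (w i / (x i p - w i))) as [h2|h2].
        - assert (x i p - w i >= w i).
          { apply Rmult_le_compat_r with (r := w i) in h1; [|lra].
            replace ((x i p - w i) / w i * w i) with (x i p - w i) in h1 by (field; lra). lra. }
          assert (w i >= x i p - w i).
          { apply Rmult_le_compat_r with (r := x i p - w i) in h2; [|lra].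
            replace (w i / (x i p - w i) * (x i p - w i)) with (w i) in h2 by (field; lra). lra. }
          assert (Hxw : x i p - w i = w i) by lra. rewrite Hxw. field; lra.
        - field; lra.
        - field; lra.
        - exfalso. apply h2. apply Rnot_le_lt in h1.
          apply Rmult_lt_compat_r with (r := w i) in h1; [|lra].
          replace ((x i p - w i) / w i * w i) with (x i p - w i) in h1 by (field; lra).
          apply Rmult_le_reg_r with (x i p - w i); [lra|].
          replace (w i / (x i p - w i) * (x i p - w i)) with (w i) by (field; lra). lra. }
      replace (lam * p i * (x i p - w i) * Rmin 1 (w i / (x i p - w i)))
        with (lam * p i * (m i * w i)) by (rewrite Heq; ring).
      ring. }
  assert (Hpart1 : phi n w x p' <= phi n w x p -
      sumR n (fun i => lam * p i * Rabs (x i p - w i) * Rmin 1 (w i / Rabs (x i p - w i)))).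
  { unfold phi.
    rewrite (sumR_ext n (fun i => p' i * Rabs (x i p' - w i))
               (fun i => Rabs (p' i * x i p' - p' i * w i))).
    2:{ intros i hi. rewrite <- Rmult_minus_distr_l, Rabs_mult, (Rabs_pos_eq (p' i)); auto.
        left; apply hp'; auto. }
    eapply Rle_trans; [apply sumR_le; exact Hgood|].
    rewrite sumR_plus, sumR_minus, sumR_plus.
    rewrite sumR_scal. rewrite (hspend _ hp'), (hspend _ hp), (hspend _ hq).
    rewrite (sumR_ext _ _ _ Hid). rewrite sumR_minus. lra. }
  split; [lra|].
  intros d hd hxd.
  assert (Hterm : forall i, (i < n)%nat -> lam / (d - 1) * (p i * Rabs (x i p - w i)) <=
      lam * p i * Rabs (x i p - w i) * Rmin 1 (w i / Rabs (x i p - w i))).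
  { intros i hi. assert (0 < p i) by auto. assert (0 < w i) by auto.
    assert (0 < x i p) by (apply hxpos; auto). assert (hxd' := hxd i hi).
    set (A := Rabs (x i p - w i)).
    destruct (Req_dec A 0) as [hA|hA].
    { rewrite hA. rewrite !Rmult_0_r, Rmult_0_l. lra. }
    assert (A > 0) by (unfold A in *; pose proof (Rabs_pos (x i p - w i)); lra).
    assert (A <= (d - 1) * w i).
    { unfold A. unfold Rabs. destruct (Rcase_abs (x i p - w i)); nra. }
    assert (Hmin : 1 / (d - 1) <= Rmin 1 (w i / A)).
    { unfold Rmin. destruct (Rle_dec 1 (w i / A)).
      - apply Rmult_le_reg_r with (d - 1); [lra|].
        replace (1 / (d - 1) * (d - 1)) with 1 by (field; lra). lra.
      - apply Rmult_le_reg_r with (A * (d - 1)); [nra|].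
        replace (1 / (d - 1) * (A * (d - 1))) with A by (field; lra).
        replace (w i / A * (A * (d - 1))) with ((d - 1) * w i) by (field; lra). lra. }
    replace (lam / (d - 1) * (p i * A)) with (lam * p i * A * (1 / (d - 1))) by (field; lra).
    apply Rmult_le_compat_l; [|exact Hmin].
    apply Rmult_le_pos; [|lra]. apply Rmult_le_pos; lra. }
  assert (Hs := sumR_le n _ _ Hterm). rewrite sumR_scal in Hs.
  unfold phi in *. 
  replace ((1 - lam / (d - 1)) * sumR n (fun i => p i * Rabs (x i p - w i)))
    with (sumR n (fun i => p i * Rabs (x i p - w i)) - lam / (d - 1) * sumR n (fun i => p i * Rabs (x i p - w i))) by ring.
  lra.
Qed.

Print Assumptions mainTheorem7.
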